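(* Let $G$ be a graph and $\ell=\mathrm{OPT}(G)-\mathrm{LP}(G)$. There exists a set $X\subseteq V(G)$ with $|X|\le 2\ell$ such that $\mathrm{OPT}(G-X)=\mathrm{LP}(G-X)$.
   Context: $\mathrm{OPT}(G)$ is the minimum size of a vertex cover of $G$; $\mathrm{LP}(G)=\min\{\sum_{v\in V(G)}x_v : x_u+x_v\ge1\text{ for all }\{u,v\}\in E(G),\ 0\le x_v\le1\}$. *)

(* Defs.v *)
From HB Require Import structures.
From mathcomp Require Import all_boot all_order all_algebra.
Set Implicit Arguments. Unset Strict Implicit. Unset Printing Implicit Defensive.
Import Order.TTheory GRing.Theory Num.Theory.
Local Open Scope ring_scope.

(* A simple graph: vertex type T : finType, adjacency e : rel T
   (symmetric, irreflexive; assumed in the theorem).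
   Subgraphs induced on a vertex set V : {set T} are handled by restricting
   everything to V; G - X is the subgraph induced on ~: X. *)

Definition is_vc (T : finType) (e : rel T) (V C : {set T}) : bool :=
  (C \subset V) &&
  [forall u in V, forall v in V, e u v ==> (u \in C) || (v \in C)].

(* OPT: the minimum size of a vertex cover of the induced graph on V
   (V itself is always a cover, so the arg min is well defined). *)
Definition opt (T : finType) (e : rel T) (V : {set T}) : nat :=
  #|[arg min_(C < V | is_vc e V C) #|C|]|%N.

Definition lp_feasible (R : realFieldType) (T : finType) (e : rel T)
    (V : {set T}) (x : T -> R) : Prop :=
  (forall v, v \in V -> (0 <= x v) /\ (x v <= 1)) /\
  (forall u v, u \in V -> v \in V -> e u v -> 1 <= x u + x v).

Definition is_lp_value (R : realFieldType) (T : finType) (e : rel T)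
    (V : {set T}) (r : R) : Prop :=
  (exists x : T -> R, lp_feasible e V x /\ \sum_(v in V) x v = r) /\
  (forall x : T -> R, lp_feasible e V x -> r <= \sum_(v in V) x v).

(* Main.v *)
Require Import Defs.
From HB Require Import structures.
From mathcomp Require Import all_boot all_order all_algebra.
From mathcomp Require Import zify ring lra.
Set Implicit Arguments. Unset Strict Implicit. Unset Printing Implicit Defensive.
Import Order.TTheory GRing.Theory Num.Theory.
Local Open Scope ring_scope.

Definition nbr (T : finType) (r : rel T) (Q S : {set T}) : {set T} :=
  [set q in Q | [exists p in S, r p q]].

Lemma sum_split (T : finType) (R : realFieldType) (A B : {set T}) (f : T -> R) :
  A \subset B -> \sum_(i in B) f i = \sum_(i in A) f i + \sum_(i in B :\: A) f i.
Proof. by move=> sAB; rewrite (big_setID A) /= (setIidPr sAB). Qed.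

Lemma card_split (T : finType) (A B : {set T}) :
  A \subset B -> #|B| = (#|A| + #|B :\: A|)%N.
Proof. by move=> sAB; rewrite -(cardsID A B) (setIidPr sAB). Qed.

Lemma FH (T : finType) (r : rel T) (R : realFieldType) (y z : T -> R) n :
  forall (P Q : {set T}), (#|P| <= n)%N ->
  (forall S : {set T}, S \subset P -> (#|S| <= #|nbr r Q S|)%N) ->
  (forall q, q \in Q -> 0 <= z q) ->
  (forall p q, p \in P -> q \in Q -> r p q -> 1 <= y p + z q) ->
  #|P|%:R <= \sum_(p in P) y p + \sum_(q in Q) z q.
Proof.
elim: n => [|n IH] P Q hP hH hz hpq.
  have P0 : P = set0 by apply/eqP; rewrite -cards_eq0 -leqn0.
  rewrite P0 cards0 big_set0 add0r; exact: sumr_ge0.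
have [P0|/set0Pn [p pP]] := eqVneq P set0.
  rewrite P0 cards0 big_set0 add0r; exact: sumr_ge0.
case: (boolP [exists S : {set T}, [&& S \proper P, S != set0 & (#|nbr r Q S| <= #|S|)%N]]).
  case/existsP=> S /and3P [SP Sn0 hS].
  have sSP : S \subset P by case/andP: SP.
  have ltS : (#|S| < #|P|)%N by rewrite properEcard in SP; case/andP: SP.
  have sNQ : nbr r Q S \subset Q by apply/subsetP=> q; rewrite inE => /andP[].
  have ltD : (#|P :\: S| < #|P|)%N.
    rewrite (card_split sSP); have : (0 < #|S|)%N by rewrite card_gt0.
    lia.
  have IH1 := IH S (nbr r Q S) ltac:(lia).
  have IH2 := IH (P :\: S) (Q :\: nbr r Q S) ltac:(lia).
  rewrite (sum_split y sSP) (sum_split z sNQ) (card_split sSP) natrD.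
  have h1 : #|S|%:R <= \sum_(p in S) y p + \sum_(q in nbr r Q S) z q.
    apply: IH1.
    - move=> S' sS'. apply: (leq_trans (hH S' (subset_trans sS' sSP))).
      apply: subset_leq_card; apply/subsetP=> q; rewrite !inE => /andP[qQ hq].
      rewrite qQ hq /= andbT.
      case/exists_inP: hq => p' p'S' rp'; apply/exists_inP; exists p' => //.
      exact: (subsetP sS').
    - by move=> q /(subsetP sNQ); apply: hz.
    - by move=> p' q p'S /(subsetP sNQ) qQ; apply: hpq => //; apply: (subsetP sSP).
  have h2 : #|P :\: S|%:R <= \sum_(p in P :\: S) y p + \sum_(q in Q :\: nbr r Q S) z q.
    apply: IH2.
    - move=> S' sS'.
      have sU : S' :|: S \subset P by rewrite subUset sSP (subset_trans sS') ?subsetDl.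
      have h := hH _ sU.
      have dis : [disjoint S' & S].
        rewrite -setI_eq0; apply/eqP/setP=> x; rewrite !inE.
        case xS: (x \in S); rewrite ?andbT ?andbF //.
        by apply/negP=> /(subsetP sS'); rewrite inE xS.
      rewrite cardsU (disjoint_setI0 dis) cards0 subn0 in h.
      have sub : nbr r Q (S' :|: S) \subset nbr r (Q :\: nbr r Q S) S' :|: nbr r Q S.
        apply/subsetP=> q; rewrite !inE => /andP[qQ /exists_inP[p']].
        rewrite inE => /orP[p'S' rp'|p'S rp'].
          rewrite qQ /=; case: [exists p0 in S, r p0 q] => //=.
          by rewrite orbF; apply/exists_inP; exists p'.
        by rewrite qQ; apply/orP; right; apply/exists_inP; exists p'.
      have := subset_leq_card sub; rewrite cardsU. lia.
    - by move=> q; rewrite inE => /andP[_]; apply: hz.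
    - by move=> p' q; rewrite !inE => /andP[_ p'P] /andP[_ qQ]; apply: hpq.
  lra.
rewrite negb_exists => /forallP hno.
have : (#|[set p]| <= #|nbr r Q [set p]|)%N by apply: hH; rewrite sub1set.
rewrite cards1 card_gt0 => /set0Pn [q]; rewrite inE => /andP[qQ /exists_inP[p']].
rewrite inE => /eqP -> rpq.
have ltP : (#|P :\ p| < #|P|)%N by rewrite (cardsD1 p P) pP.
have IH3 := IH (P :\ p) (Q :\ q) ltac:(lia).
rewrite (big_setD1 _ pP) (big_setD1 _ qQ) /= (cardsD1 p P) pP natrD.
have h3 : #|P :\ p|%:R <= \sum_(i in P :\ p) y i + \sum_(i in Q :\ q) z i.
  apply: IH3.
  - move=> S' sS'.
    have [->|S'n0] := eqVneq S' set0; first by rewrite cards0.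
    have sP : S' \subset P by apply: (subset_trans sS'); apply: subsetDl.
    have pr : S' \proper P.
      apply/properP; split => //; exists p => //.
      by apply/negP=> /(subsetP sS'); rewrite !inE eqxx.
    have := hno S'; rewrite pr S'n0 /= -ltnNge => lt.
    have sub : nbr r Q S' :\ q \subset nbr r (Q :\ q) S'.
      apply/subsetP=> x; rewrite !inE => /andP[xq /andP[xQ ->]].
      by rewrite xq xQ.
    have := subset_leq_card sub; have := cardsD1 q (nbr r Q S').
    case: (q \in nbr r Q S'); simpl; lia.
  - by move=> x; rewrite inE => /andP[_]; apply: hz.
  - by move=> p0 q0; rewrite !inE => /andP[_ p0P] /andP[_ q0Q]; apply: hpq.
have := hpq p q pP qQ rpq. rewrite [true%:R]/= . lra.
Qed.

Lemma ar1 (nb nbv s i sd m : nat) (t : bool) : nb = (t + nbv)%N -> s = (i + sd)%N -> (sd + nbv <= m)%N -> (i == 0)%N || (i < nb)%N -> (s <= m)%N.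
Proof. case: t => /= h1 h2 h3 /orP[/eqP h4|h4]; lia. Qed.

Lemma ar2a (nI' nI nIS s h : nat) : nI' = 0%N -> nI = (nIS + nI')%N -> (nIS < s)%N -> (s <= h)%N -> (h <= nI)%N -> False.
Proof. lia. Qed.
Lemma ar2b (nNI' hS h s nIS nI nI' : nat) : (nNI' <= hS)%N -> h = (s + hS)%N -> (nIS < s)%N -> (h <= nI)%N -> nI = (nIS + nI')%N -> (nNI' <= nI')%N.
Proof. lia. Qed.
Lemma ar2c (h vI nNI' vI' hS s nIS nI nI' nV : nat) : (h + vI <= nNI' + vI')%N -> (nNI' <= hS)%N -> h = (s + hS)%N -> (nIS < s)%N -> nI = (nIS + nI')%N -> nV = (nI + vI)%N -> nV = (nI' + vI')%N -> False.
Proof. lia. Qed.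

Section Main.
Variables (T : finType) (e : rel T) (esym : symmetric e) (R : realFieldType).

Lemma vcP (V C : {set T}) : reflect (C \subset V /\ forall u w, u \in V -> w \in V -> e u w -> (u \in C) || (w \in C)) (is_vc e V C).
Proof.
apply: (iffP andP) => [[sCV h]|[sCV h]]; split => //.
  move=> u w uV wV euw.
  by move: h => /forallP /(_ u) /implyP /(_ uV) /forallP /(_ w) /implyP /(_ wV) /implyP /(_ euw).
apply/forallP=> u; apply/implyP=> uV; apply/forallP=> w; apply/implyP=> wV; apply/implyP; exact: h.
Qed.

Lemma vc_self (V : {set T}) : is_vc e V V.
Proof. by apply/vcP; split => // u w uV _ _; rewrite uV. Qed.

Lemma opt_spec (V : {set T}) : exists C, is_vc e V C /\ #|C| = opt e V.
Proof.
rewrite /opt; case: arg_minnP; first exact: vc_self.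
by move=> C hC _; exists C.
Qed.

Lemma opt_min (V C : {set T}) : is_vc e V C -> (opt e V <= #|C|)%N.
Proof.
rewrite /opt => hC; case: arg_minnP; first exact: vc_self.
by move=> C' _ h; apply: h.
Qed.

Lemma feas_sub (V W : {set T}) (y : T -> R) : W \subset V -> lp_feasible e V y -> lp_feasible e W y.
Proof.
move=> sWV [h1 h2]; split.
  by move=> v /(subsetP sWV); apply: h1.
by move=> u v /(subsetP sWV) uV /(subsetP sWV) vV; apply: h2.
Qed.

Lemma sum_ind (A C : {set T}) :
  \sum_(v in A) ((v \in C)%:R : R) = #|A :&: C|%:R.
Proof.
rewrite (big_setID C) /= [X in _ + X]big1; last by move=> i; rewrite !inE => /andP[nC _]; rewrite (negbTE nC).
rewrite addr0 (eq_bigr (fun _ => 1)); last by move=> i; rewrite !inE => /andP[_ ->].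
by rewrite sumr_const.
Qed.


Definition goodX (V X : {set T}) :=
  [/\ X \subset V,
   exists C : {set T}, is_vc e (V :\: X) C /\
      (forall y : T -> R, lp_feasible e (V :\: X) y -> #|C|%:R <= \sum_(v in V :\: X) y v)
 & exists x : T -> R, lp_feasible e V x /\
      (#|X|%:R + 2 * \sum_(v in V) x v <= 2 * (opt e V)%:R)].

Lemma trivial_case (V : {set T}) : opt e V = 0%N -> goodX V set0.
Proof.
move=> o0; have [C0 [vc0 c0]] := opt_spec V.
have C00 : C0 = set0 by apply/eqP; rewrite -cards_eq0 c0 o0.
have noedge : forall u w, u \in V -> w \in V -> ~~ e u w.
  move=> u w uV wV; apply/negP=> euw.
  by move/vcP: vc0 => [_ /(_ u w uV wV euw)]; rewrite C00 !inE.
split; first exact: sub0set.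
  exists set0; split.
    apply/vcP; split; first exact: sub0set.
    by move=> u w; rewrite setD0 => uV wV euw; move: (noedge u w uV wV); rewrite euw.
  move=> y [hy _]; rewrite cards0; apply: sumr_ge0 => v /hy []//.
exists (fun _ => 0); split.
  split; first by move=> v _; rewrite lexx ler01.
  by move=> u w uV wV euw; move: (noedge u w uV wV); rewrite euw.
by rewrite cards0 big1 // o0 mulr0 addr0.
Qed.

Definition indep (I : {set T}) := [forall u in I, forall w in I, ~~ e u w].

Lemma indepP (I : {set T}) : reflect (forall u w, u \in I -> w \in I -> ~~ e u w) (indep I).
Proof.
apply: (iffP forallP) => [h u w uI wI|h u].
  by move: (h u) => /implyP /(_ uI) /forallP /(_ w) /implyP /(_ wI).
by apply/implyP=> uI; apply/forallP=> w; apply/implyP=> wI; apply: h.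
Qed.

Definition crown (V I : {set T}) :=
  [&& I \subset V, I != set0, indep I & (#|nbr e V I| <= #|I|)%N].

Lemma main_ind n : forall V : {set T}, (#|V| <= n)%N -> exists X, goodX V X.
Proof.
elim: n => [|n IH] V hV.
  exists set0; apply: trivial_case.
  have := opt_min (vc_self V); lia.
have [o0|on0] := eqVneq (opt e V) 0%N; first by exists set0; apply: trivial_case.
have [C0 [vc0 c0]] := opt_spec V.
have sC0V : C0 \subset V by case/vcP: vc0.
case: (boolP [exists I, crown V I]).
  case/existsP => I0 cI0.
  have [I [cI minI]] : exists I, crown V I /\ forall J, crown V J ->
      (#|nbr e V I| + #|V :\: I| <= #|nbr e V J| + #|V :\: J|)%N.
    by case: (arg_minnP (fun I => (#|nbr e V I| + #|V :\: I|)%N) cI0) => J cJ hJ; exists J.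
  move: (cI) => /and4P [sIV In0 /indepP indI hcard].
  set H := nbr e V I.
  have sHV : H \subset V by apply/subsetP=> u; rewrite inE => /andP[].
  have disIH : forall u, u \in I -> u \notin H.
    move=> u uI; rewrite inE; apply/negP=> /andP[_ /exists_inP[p pI epu]].
    by move: (indI p u pI uI); rewrite epu.
  have hall : forall S : {set T}, S \subset H -> (#|S| <= #|nbr e I S|)%N.
    move=> S sSH; rewrite leqNgt; apply/negP => lt.
    set I' := I :\: nbr e I S.
    have sNI : nbr e I S \subset I by apply/subsetP=> u; rewrite inE => /andP[].
    have sI'I : I' \subset I by apply: subsetDl.
    have sN' : nbr e V I' \subset H :\: S.
      apply/subsetP=> u; rewrite [u \in nbr _ _ _]inE => /andP[uV /exists_inP[p pI' epu]].
      move: pI'; rewrite /I' !inE negb_and => /andP[/orP[pnI|np] pI].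
        by rewrite pI in pnI.
      apply/andP; split.
        apply/negP=> uS; move/negP: np; apply; apply/exists_inP; exists u => //; by rewrite esym.
      by rewrite uV /=; apply/exists_inP; exists p.
    have c1 := card_split sNI.
    have c2 := card_split sSH.
    have c3 := subset_leq_card sN'.
    have hH : (#|H| <= #|I|)%N := hcard.
    have [I'0|I'n0] := eqVneq I' set0.
      have c4 : #|I :\: nbr e I S| = 0%N by rewrite -/I' I'0 cards0.
      exact: (ar2a c4 c1 lt (subset_leq_card sSH) hH).
    have cI' : crown V I'.
      apply/and4P; split => //.
      - exact: subset_trans sI'I sIV.
      - by apply/indepP=> u w /(subsetP sI'I) uI /(subsetP sI'I) wI; apply: indI.
      - exact: (ar2b c3 c2 lt hH c1).
    have := minI I' cI'.
    have c5 := card_split sIV.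
    have c6 := card_split (subset_trans sI'I sIV).
    move=> c7; exact: (ar2c c7 c3 c2 lt c1 c5 c6).
  set V' := V :\: (I :|: H).
  have sIHV : I :|: H \subset V by rewrite subUset sIV sHV.
  have cV := card_split sIHV.
  have cIH : (0 < #|I :|: H|)%N.
    by apply: (leq_trans _ (subset_leq_card (subsetUl I H))); rewrite card_gt0.
  have [X [sXV' [C [vcC lbC]] [x [fx bx]]]] := IH V' ltac:(rewrite -/V' in cV; lia).
  have sV'V : V' \subset V by apply: subsetDl.
  have XIH : forall u, u \in X -> (u \notin I) && (u \notin H).
    by move=> u /(subsetP sXV'); rewrite !inE negb_or => /andP[/andP[-> ->]].
  have sXV : X \subset V := subset_trans sXV' sV'V.
  have sIHVX : I :|: H \subset V :\: X.
    apply/subsetP=> u uIH; rewrite inE (subsetP sIHV u uIH) andbT.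
    apply/negP=> /XIH; move: uIH; rewrite inE; case: (u \in I); case: (u \in H) => //.
  have eqV'X : (V :\: X) :\: (I :|: H) = V' :\: X.
    by apply/setP=> u; rewrite /V' !in_setD !in_setU; case: (u \in X); case: (u \in I); case: (u \in H); case: (u \in V).
  have sHIH : H \subset I :|: H by apply: subsetUr.
  have eqI : (I :|: H) :\: H = I.
    apply/setP=> u; rewrite !in_setD !in_setU; case uI: (u \in I) => /=.
      by rewrite andbT (disIH u uI).
    by case: (u \in H).
  exists X; split => //.
  + case/vcP: vcC => sCV' hC.
    exists (C :|: H); split.
      apply/vcP; split.
        rewrite subUset (subset_trans sCV') ?(subset_trans sHIH) //.
        by apply: setSD.
      move=> u w uVX wVX euw.
      case uH: (u \in H); first by rewrite !in_setU uH orbT.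
      case wH: (w \in H); first by rewrite !in_setU wH !orbT.
      case uI: (u \in I).
        have : w \in H.
          rewrite inE; move: wVX; rewrite inE => /andP[_ ->] /=.
          by apply/exists_inP; exists u.
        by rewrite wH.
      case wI: (w \in I).
        have : u \in H.
          rewrite inE; move: uVX; rewrite inE => /andP[_ ->] /=.
          by apply/exists_inP; exists w => //; rewrite esym.
        by rewrite uH.
      have uV'X : u \in V' :\: X by rewrite -eqV'X in_setD in_setU uI uH uVX.
      have wV'X : w \in V' :\: X by rewrite -eqV'X in_setD in_setU wI wH wVX.
      by rewrite !inE; case/orP: (hC u w uV'X wV'X euw) => ->; rewrite ?orbT.
    move=> y fy.
    have sV'XVX : V' :\: X \subset V :\: X by rewrite -eqV'X subsetDl.
    have h1 := lbC y (feas_sub sV'XVX fy).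
    have h2 : #|H|%:R <= \sum_(p in H) y p + \sum_(q in I) y q.
      apply: (FH (r := e) (n := #|H|)) => //.
      - by move=> q qI; case: fy => /(_ q (subsetP sIHVX q (subsetP (subsetUl I H) q qI))) [].
      - move=> p q pH qI epq; case: fy => _; apply => //.
        + exact: (subsetP sIHVX p (subsetP sHIH p pH)).
        + exact: (subsetP sIHVX q (subsetP (subsetUl I H) q qI)).
    rewrite (sum_split y sIHVX) eqV'X (sum_split y sHIH) eqI.
    have dCH : C :&: H = set0.
      apply/setP=> u; rewrite in_setI in_set0; case uC: (u \in C) => //=.
      move: (subsetP sCV' u uC); rewrite -eqV'X in_setD in_setU.
      by case: (u \in H); rewrite ?orbT.
    rewrite cardsU dCH cards0 subn0 natrD; lra.
  + pose x2 := fun u => if u \in H then 1 else if u \in I then 0 else x u.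
    exists x2.
    have x2V' : forall u, u \in V' -> x2 u = x u.
      by move=> u; rewrite /V' in_setD in_setU negb_or => /andP[/andP[/negbTE uI /negbTE uH] _]; rewrite /x2 uI uH.
    split.
      split.
        move=> u uV; rewrite /x2; case uH: (u \in H); first by rewrite lexx ler01.
        case uI: (u \in I); first by rewrite lexx ler01.
        have : u \in V' by rewrite /V' in_setD in_setU uI uH uV.
        by case: fx => /[swap] _ /[apply].
      move=> u w uV wV euw.
      have x2ge0 : forall z, z \in V -> 0 <= x2 z.
        move=> z zV; rewrite /x2; case zH: (z \in H) => //; case zI: (z \in I) => //.
        have : z \in V' by rewrite /V' in_setD in_setU zI zH zV.
        by case: fx => /[swap] _ /[apply] [[]].
      rewrite /x2; case uH: (u \in H).
        by rewrite lerDl -/(x2 w) x2ge0.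
      case wH: (w \in H).
        by rewrite lerDr -/(x2 u) (_ : (if u \in I then 0 else x u) = x2 u) ?x2ge0 // /x2 uH.
      case uI: (u \in I).
        have : w \in H by rewrite inE wV /=; apply/exists_inP; exists u.
        by rewrite wH.
      case wI: (w \in I).
        have : u \in H by rewrite inE uV /=; apply/exists_inP; exists w => //; rewrite esym.
        by rewrite uH.
      case: fx => _; apply => //; by rewrite /V' in_setD in_setU ?uI ?uH ?wI ?wH ?uV ?wV.
    have hopt : (opt e V')%:R + #|H|%:R <= (opt e V)%:R :> R.
      have vc' : is_vc e V' (V' :&: C0).
        apply/vcP; split; first exact: subsetIl.
        move=> u w uV' wV' euw; rewrite !in_setI uV' wV' /=.
        by case/vcP: vc0 => _; apply => //; apply: (subsetP sV'V).
      have h1 := opt_min vc'.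
      have h2 : #|H|%:R <= \sum_(p in H) ((p \in C0)%:R : R) + \sum_(q in I) (q \in C0)%:R.
        apply: (FH (r := e) (n := #|H|)) => //.
        move=> p q pH qI epq.
        case/vcP: vc0 => _ /(_ p q (subsetP sHV p pH) (subsetP sIV q qI) epq).
        by case: (p \in C0); case: (q \in C0) => //= _; rewrite ?add0r ?addr0 ?lerDl ?lexx.
      have h3 : (opt e V)%:R = \sum_(u in V) ((u \in C0)%:R : R).
        by rewrite sum_ind (setIidPr sC0V) c0.
      rewrite h3 (sum_split _ sIHV) (sum_split _ sHIH) eqI -/V' (sum_ind V' C0).
      move: h1; rewrite -(ler_nat R) => h1; lra.
    rewrite (sum_split _ sIHV) (sum_split _ sHIH) eqI -/V'.
    have sV' : \sum_(u in V') x2 u = \sum_(u in V') x u.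
      by apply: eq_bigr => u uV'; apply: x2V'.
    have sH : \sum_(u in H) x2 u = #|H|%:R.
      rewrite (eq_bigr (fun _ => 1)); last by move=> u uH; rewrite /x2 uH.
      by rewrite sumr_const.
    have sI : \sum_(u in I) x2 u = 0.
      by apply: big1 => u uI; rewrite /x2 (negbTE (disIH u uI)) uI.
    rewrite sV' sH sI.
    lra.
rewrite negb_exists => /forallP nocrown.
have /set0Pn [v vC0] : C0 != set0 by rewrite -cards_eq0 c0.
have vV : v \in V := subsetP sC0V v vC0.
set V' := V :\ v.
have cV : #|V| = (1 + #|V'|)%N by rewrite (cardsD1 v V) vV.
have [X [sXV' [C [vcC lbC]] [x [fx bx]]]] := IH V' ltac:(lia).
exists (v |: X).
have vX : v \notin X by apply/negP=> /(subsetP sXV'); rewrite !inE eqxx.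
have eqD : V :\: (v |: X) = V' :\: X.
  by apply/setP=> u; rewrite !inE; case: (u == v); case: (u \in X); case: (u \in V).
split.
- rewrite subUset sub1set vV (subset_trans sXV') //; exact: subsetDl.
- by rewrite eqD; exists C.
exists (fun _ => 2^-1); split.
  split; first by move=> u _; rewrite invr_ge0 ler0n invf_le1 ?ler1n.
  by move=> u w _ _ _; lra.
have hopt : (opt e V' + 1 <= opt e V)%N.
  have vc' : is_vc e V' (C0 :\ v).
    apply/vcP; split; first exact: setSD.
    move=> u w; rewrite !inE => /andP[uv uV] /andP[wv wV] euw.
    by rewrite uv wv /=; case/vcP: vc0 => _ /(_ u w uV wV euw).
  have := opt_min vc'; have := cardsD1 v C0; rewrite vC0 -c0; lia.
have hfh : #|V'|%:R <= \sum_(u in V') x u + \sum_(u in V') x u.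
  apply: (FH (r := e) (n := #|V'|)) => //.
  - move=> S sS.
    set I := [set u in S | ~~ [exists w in S, e u w]].
    have sIS : I \subset S by apply/subsetP=> u; rewrite inE => /andP[].
    have sIV : I \subset V.
      apply: (subset_trans sIS); apply: (subset_trans sS); exact: subsetDl.
    have indI : indep I.
      apply/indepP=> u w; rewrite !inE => /andP[uS /exists_inP nu] /andP[wS _].
      by apply/negP=> euw; apply: nu; exists w.
    have := nocrown I; rewrite /crown sIV indI /= negb_and negbK -ltnNge -cards_eq0 => hI.
    have d1 : S :\: I \subset nbr e V' S.
      apply/subsetP=> u; rewrite !inE negb_and negbK => /andP[/orP[uS'|/exists_inP[w wS ewu]] uS].
        by rewrite uS in uS'.
      move: (subsetP sS u uS); rewrite !inE => /andP[-> ->] /=; apply/exists_inP; exists w => //; by rewrite esym.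
    have d2 : nbr e V I :\ v \subset nbr e V' S.
      apply/subsetP=> u; rewrite !inE => /andP[uv /andP[uV /exists_inP[p pI epu]]].
      by rewrite uv uV /=; apply/exists_inP; exists p => //; apply: (subsetP sIS).
    have dis : (S :\: I) :&: (nbr e V I :\ v) = set0.
      apply/setP=> u; rewrite !inE.
      case uS: (u \in S); rewrite /= ?andbT ?andbF //.
      case: (boolP [exists p in I, e p u]) => [/exists_inP[p pI epu]|_]; last by rewrite !andbF.
      move: pI; rewrite inE => /andP[_ /exists_inP np].
      by case: np; exists u.
    have := subset_leq_card (_ : (S :\: I) :|: (nbr e V I :\ v) \subset nbr e V' S).
    rewrite cardsU dis cards0 subn0 => /(_ ltac:(by rewrite subUset d1 d2)).
    have := card_split sIS; have := cardsD1 v (nbr e V I).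
    move=> h1 h2 h3; exact: ar1 h1 h2 h3 hI.
  - by move=> u uV'; case: fx => /(_ u uV') [].
  - by move=> p q pV qV epq; case: fx => _ /(_ p q pV qV epq).
rewrite sumr_const cardsU1 vX.
have e2 : 2 * (2^-1 *+ #|V|) = #|V|%:R :> R.
  by rewrite -mulr_natr; lra.
rewrite e2 cV !natrD; move: hopt; rewrite -(ler_nat R) natrD => hopt.
move: bx hfh hopt; rewrite [true%:R]/=; lra.
Qed.

End Main.

Unset Implicit Arguments.

Theorem mainTheorem10 (T : finType) (e : rel T)
    (esym : symmetric e) (eirr : irreflexive e)
    (R : realFieldType) (lp : R) (Hlp : is_lp_value e [set: T] lp) :
  exists X : {set T},
    (#|X|%:R <= 2 * ((opt e [set: T])%:R - lp)) /\
    is_lp_value e (~: X) ((opt e (~: X))%:R : R).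
Proof.
have [X [_ [C [vcC lbC]] [x [fx bx]]]] := main_ind esym R (leqnn #|[set: T]|).
exists X; split.
  case: Hlp => _ /(_ x fx) h; lra.
rewrite -setTD.
have [C0 [vc0 c0]] := opt_spec e (setT :\: X).
split.
  exists (fun v => (v \in C0)%:R); split.
    split; first by move=> v _; case: (v \in C0); rewrite ?lexx ?ler01.
    move=> u w uV wV euw; case/vcP: vc0 => _ /(_ u w uV wV euw).
    by case: (u \in C0); case: (w \in C0) => //= _; rewrite ?add0r ?addr0 ?lerDl ?lexx.
  case/vcP: vc0 => sC0 _.
  by rewrite sum_ind (setIidPr sC0) c0.
move=> y fy; apply: le_trans (lbC y fy).
by rewrite ler_nat; apply: opt_min.
Qed.
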